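(* (Truth lemma) Let $\Phi$ be the closure $cl(\varphi_0)$ of a formula and $M^*$ the canonical model for $\Phi$. For every $w\in W^*$ and every $\varphi\in\Phi$, $M^*,w\vDash\varphi$ iff $\varphi\in w$.
   Context: $\mathcal{L}_{AIL}$: $\varphi::=p\mid\neg\varphi\mid\varphi\wedge\varphi\mid A_i\varphi\mid I_i\varphi\mid E_i\varphi\mid[\approx]_i\varphi\mid[\circ^+]_i\varphi$ (countable atoms $\mathcal{P}$, finite agents $\mathcal{G}$). Hilbert system $\mathbf{AIL}$: axioms — propositional tautologies; $A_i\varphi\leftrightarrow A_i\neg\varphi$; $A_i(\varphi\wedge\psi)\leftrightarrow A_i\varphi\wedge A_i\psi$; $A_i\varphi\leftrightarrow A_iO_j\varphi$ for $O_j\in\{A_j,I_j,[\approx]_j,[\circ^+]_j,E_j\}$; $A_i\varphi\to I_iA_i\varphi$; $\neg A_i\varphi\to I_i\neg A_i\varphi$; $A_ip\wedge p\to[\approx]_ip$; for $\Box\in\{I_i,[\approx]_i\}$: $\Box(\varphi\to\psi)\to(\Box\varphi\to\Box\psi)$, $\Box\varphi\to\varphi$, $\neg\Box\varphi\to\Box\neg\Box\varphi$; $[\circ^+]_i(\varphi\to\psi)\to([\circ^+]_i\varphi\to[\circ^+]_i\psi)$; $[\circ^+]_i\varphi\to\varphi\wedge[\approx]_iI_i[\circ^+]_i\varphi$; $[\circ^+]_i(\varphi\to[\approx]_iI_i\varphi)\to(\varphi\to[\circ^+]_i\varphi)$; $E_i\varphi\leftrightarrow A_i\varphi\wedge[\circ^+]_i\varphi$;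 rules: modus ponens, necessitation for $I_i,[\approx]_i,[\circ^+]_i$. $\Gamma\vdash\varphi$ iff $\vdash\bigwedge\Gamma'\to\varphi$ for some finite $\Gamma'\subseteq\Gamma$. $cl(\varphi_0)$ is the smallest set containing $\varphi_0$ closed under: subformulas; $\neg\psi$ for non-negations $\psi$; $A_i\psi\Rightarrow A_i\chi$ for subformulas $\chi$ of $\psi$; $A_i\psi\Rightarrow I_iA_i\psi,I_i\neg A_i\psi,[\approx]_ip$ for atoms $p$ in $\psi$; $I_i\psi\Rightarrow I_iI_i\psi,I_i\neg I_i\psi$ unless $\psi$ is $I_i\chi$ or $\neg I_i\chi$; analogously for $[\approx]_i$; $[\circ^+]_i\psi\Rightarrow[\approx]_iI_i[\circ^+]_i\psi$; $E_i\psi\Rightarrow A_i\psi,[\circ^+]_i\psi$. The canonical model for $\Phi$: $W^*$ = set of maximal consistent sets in $\Phi$ (subsets $\Gamma\subseteq\Phi$ with $\Gamma\nvdash\bot$ not properly extendable within $\Phi$); $(\Gamma,\Delta)\in\sim_i^*$ iff $\{\psi:I_i\psi\in\Gamma\}\subseteq\Delta$; $(\Gamma,\Delta)\in\approx_i^*$ iff $\{\psi:[\approx]_i\psi\in\Gamma\}\subseteq\Delta$; $V^*(p)=\{\Gamma:p\in\Gamma\}$; $\mathscr{A}_i^*(\Gamma)=\{p:A_ip\in\Gamma\}$. Satisfaction in $M^*$: $p$ iff $w\in V^*(p)$; Boolean usual; $A_i\varphi$ iff every atom occurring in $\varphi$ is in $\mathscr{A}_i^*(w)$; $I_i\varphi$,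 $[\approx]_i\varphi$, $[\circ^+]_i\varphi$ iff $\varphi$ holds at every $v$ with $(w,v)$ in $\sim_i^*$, $\approx_i^*$, $(\sim_i^*\circ\approx_i^* )^+$ respectively, where $\sim_i^*\circ\approx_i^*=\{(w,v):\exists t\,((w,t)\in\approx_i^*,(t,v)\in\sim_i^* )\}$ and $^+$ is transitive closure; $E_i\varphi$ iff $A_i\varphi$ and $[\circ^+]_i\varphi$ hold at $w$. *)

(* Defs.v *)
From Stdlib Require Import List Relations.
Import ListNotations.
Set Implicit Arguments.

Inductive form (Ag : Type) : Type :=
| Atom : nat -> form Ag
| Neg  : form Ag -> form Ag
| And  : form Ag -> form Ag -> form Ag
| Aw   : Ag -> form Ag -> form Ag
| Inf  : Ag -> form Ag -> form Ag
| Ind  : Ag -> form Ag -> form Ag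
| Cp   : Ag -> form Ag -> form Ag
| Ex   : Ag -> form Ag -> form Ag.
Arguments Atom {Ag} _.

Definition Imp {Ag} (a b : form Ag) : form Ag := Neg (And a (Neg b)).
Definition Iff {Ag} (a b : form Ag) : form Ag := And (Imp a b) (Imp b a).
Definition Bot {Ag} : form Ag := And (Atom 0) (Neg (Atom 0)).
Definition Top {Ag} : form Ag := Neg Bot.

(* Propositional tautologies: true under every Boolean valuation of the
   non-Boolean (atomic or modal) subformulas. *)
Fixpoint peval {Ag} (v : form Ag -> bool) (f : form Ag) : bool :=
  match f with
  | Neg a => negb (peval v a)
  | And a b => andb (peval v a) (peval v b)
  | _ => v f
  end.
Definition tautology {Ag} (f : form Ag) : Prop := forall v, peval v f = true.

Inductive prov {Ag} : form Ag -> Prop :=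
| ax_taut : forall f, tautology f -> prov f
| ax_A_neg : forall i f, prov (Iff (Aw i f) (Aw i (Neg f)))
| ax_A_and : forall i f g, prov (Iff (Aw i (And f g)) (And (Aw i f) (Aw i g)))
| ax_A_A : forall i j f, prov (Iff (Aw i f) (Aw i (Aw j f)))
| ax_A_I : forall i j f, prov (Iff (Aw i f) (Aw i (Inf j f)))
| ax_A_Ind : forall i j f, prov (Iff (Aw i f) (Aw i (Ind j f)))
| ax_A_Cp : forall i j f, prov (Iff (Aw i f) (Aw i (Cp j f)))
| ax_A_E : forall i j f, prov (Iff (Aw i f) (Aw i (Ex j f)))
| ax_A_intro : forall i f, prov (Imp (Aw i f) (Inf i (Aw i f)))
| ax_nA_intro : forall i f, prov (Imp (Neg (Aw i f)) (Inf i (Neg (Aw i f))))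
| ax_A_atom : forall i p, prov (Imp (And (Aw i (Atom p)) (Atom p)) (Ind i (Atom p)))
| ax_I_K : forall i f g, prov (Imp (Inf i (Imp f g)) (Imp (Inf i f) (Inf i g)))
| ax_I_T : forall i f, prov (Imp (Inf i f) f)
| ax_I_5 : forall i f, prov (Imp (Neg (Inf i f)) (Inf i (Neg (Inf i f))))
| ax_Ind_K : forall i f g, prov (Imp (Ind i (Imp f g)) (Imp (Ind i f) (Ind i g)))
| ax_Ind_T : forall i f, prov (Imp (Ind i f) f)
| ax_Ind_5 : forall i f, prov (Imp (Neg (Ind i f)) (Ind i (Neg (Ind i f))))
| ax_Cp_K : forall i f g, prov (Imp (Cp i (Imp f g)) (Imp (Cp i f) (Cp i g)))
| ax_Cp_fix : forall i f, prov (Imp (Cp i f) (And f (Ind i (Inf i (Cp i f)))))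
| ax_Cp_ind : forall i f,
    prov (Imp (Cp i (Imp f (Ind i (Inf i f)))) (Imp f (Cp i f)))
| ax_E : forall i f, prov (Iff (Ex i f) (And (Aw i f) (Cp i f)))
| r_mp : forall f g, prov (Imp f g) -> prov f -> prov g
| r_nec_I : forall i f, prov f -> prov (Inf i f)
| r_nec_Ind : forall i f, prov f -> prov (Ind i f)
| r_nec_Cp : forall i f, prov f -> prov (Cp i f).

Fixpoint bigAnd {Ag} (l : list (form Ag)) : form Ag :=
  match l with
  | [] => Top
  | x :: l' => And x (bigAnd l')
  end.

Definition derives {Ag} (G : form Ag -> Prop) (f : form Ag) : Prop :=
  exists l, (forall x, In x l -> G x) /\ prov (Imp (bigAnd l) f).

Inductive subf {Ag} (c : form Ag) : form Ag -> Prop :=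
| sf_refl : subf c c
| sf_neg : forall a, subf c a -> subf c (Neg a)
| sf_andl : forall a b, subf c a -> subf c (And a b)
| sf_andr : forall a b, subf c b -> subf c (And a b)
| sf_Aw : forall i a, subf c a -> subf c (Aw i a)
| sf_Inf : forall i a, subf c a -> subf c (Inf i a)
| sf_Ind : forall i a, subf c a -> subf c (Ind i a)
| sf_Cp : forall i a, subf c a -> subf c (Cp i a)
| sf_Ex : forall i a, subf c a -> subf c (Ex i a).

Definition occurs {Ag} (p : nat) (f : form Ag) : Prop := subf (Atom p) f.

Inductive cl {Ag} (f0 : form Ag) : form Ag -> Prop :=
| cl_base : cl f0 f0
| cl_sub : forall f c, cl f0 f -> subf c f -> cl f0 c
| cl_neg : forall f, cl f0 f -> (forall c, f <> Neg c) -> cl f0 (Neg f)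
| cl_A_sub : forall i f c, cl f0 (Aw i f) -> subf c f -> cl f0 (Aw i c)
| cl_A_IA : forall i f, cl f0 (Aw i f) -> cl f0 (Inf i (Aw i f))
| cl_A_InA : forall i f, cl f0 (Aw i f) -> cl f0 (Inf i (Neg (Aw i f)))
| cl_A_atom : forall i f p, cl f0 (Aw i f) -> occurs p f -> cl f0 (Ind i (Atom p))
| cl_I_I : forall i f, cl f0 (Inf i f) ->
    ~ (exists c, f = Inf i c \/ f = Neg (Inf i c)) -> cl f0 (Inf i (Inf i f))
| cl_I_nI : forall i f, cl f0 (Inf i f) ->
    ~ (exists c, f = Inf i c \/ f = Neg (Inf i c)) -> cl f0 (Inf i (Neg (Inf i f)))
| cl_Ind_Ind : forall i f, cl f0 (Ind i f) ->
    ~ (exists c, f = Ind i c \/ f = Neg (Ind i c)) -> cl f0 (Ind i (Ind i f))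
| cl_Ind_nInd : forall i f, cl f0 (Ind i f) ->
    ~ (exists c, f = Ind i c \/ f = Neg (Ind i c)) -> cl f0 (Ind i (Neg (Ind i f)))
| cl_Cp : forall i f, cl f0 (Cp i f) -> cl f0 (Ind i (Inf i (Cp i f)))
| cl_E_A : forall i f, cl f0 (Ex i f) -> cl f0 (Aw i f)
| cl_E_Cp : forall i f, cl f0 (Ex i f) -> cl f0 (Cp i f).

Definition mcs {Ag} (Phi G : form Ag -> Prop) : Prop :=
  (forall x, G x -> Phi x) /\ ~ derives G Bot /\
  (forall D : form Ag -> Prop, (forall x, G x -> D x) -> (forall x, D x -> Phi x) ->
     (exists x, D x /\ ~ G x) -> derives D Bot).

Definition W {Ag} (Phi : form Ag -> Prop) : Type := { G : form Ag -> Prop | mcs Phi G }.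

Definition simR {Ag} {Phi : form Ag -> Prop} (i : Ag) (w v : W Phi) : Prop :=
  forall f, proj1_sig w (Inf i f) -> proj1_sig v f.
Definition indR {Ag} {Phi : form Ag -> Prop} (i : Ag) (w v : W Phi) : Prop :=
  forall f, proj1_sig w (Ind i f) -> proj1_sig v f.
Definition compR {Ag} {Phi : form Ag -> Prop} (i : Ag) (w v : W Phi) : Prop :=
  exists t, indR i w t /\ simR i t v.
Definition cpR {Ag} {Phi : form Ag -> Prop} (i : Ag) : relation (W Phi) :=
  clos_trans (W Phi) (compR i).

Definition awset {Ag} {Phi : form Ag -> Prop} (i : Ag) (w : W Phi) (p : nat) : Prop :=
  proj1_sig w (Aw i (Atom p)).

Fixpoint sat {Ag} {Phi : form Ag -> Prop} (w : W Phi) (f : form Ag) {struct f} : Prop :=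
  match f with
  | Atom p => proj1_sig w (Atom p)
  | Neg a => ~ sat w a
  | And a b => sat w a /\ sat w b
  | Aw i a => forall p, occurs p a -> awset i w p
  | Inf i a => forall v, simR i w v -> sat v a
  | Ind i a => forall v, indR i w v -> sat v a
  | Cp i a => forall v, cpR i w v -> sat v a
  | Ex i a => (forall p, occurs p a -> awset i w p) /\ (forall v, cpR i w v -> sat v a)
  end.

(* Main.v *)
Require Import Defs.
From Stdlib Require Import List Relations Classical Bool.
Import ListNotations.
Set Implicit Arguments.

Section Prop1.
Context {Ag : Type}.
Implicit Types a b c f g x y p q r : form Ag.

Definition sem_imp (p q : form Ag) := forall v, peval v p = true -> peval v q = true.

Lemma prov_sem p q : prov p -> sem_imp p q -> prov q.
Proof.
  intros Hp Hs. apply (r_mp (f:=p)); [|exact Hp].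
  apply ax_taut. intro v. unfold Imp; simpl.
  destruct (peval v p) eqn:E; simpl; auto.
  rewrite (Hs v E). reflexivity.
Qed.

Lemma peval_bigAnd v (l : list (form Ag)) : peval v (bigAnd l) = forallb (peval v) l.
Proof. induction l as [|x l IH]; simpl; [destruct (v (Atom 0)); auto|now rewrite IH]. Qed.

Lemma prov_and p q : prov p -> prov q -> prov (And p q).
Proof.
  intros Hp Hq. apply (r_mp (f:=q)); auto.
  apply (prov_sem Hp). intros v H. unfold Imp; simpl. rewrite H. now destruct (peval v q).
Qed.

Lemma prov_sem2 p q r : prov p -> prov q -> sem_imp (And p q) r -> prov r.
Proof. intros H1 H2 H3. exact (prov_sem (prov_and H1 H2) H3). Qed.

Lemma peval_imp v p q : peval v (Imp p q) = implb (peval v p) (peval v q).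
Proof. unfold Imp; simpl. destruct (peval v p), (peval v q); auto. Qed.

Lemma peval_Bot v : peval (Ag:=Ag) v Bot = false.
Proof. unfold Bot; simpl. destruct (v (Atom 0)); auto. Qed.

Lemma peval_iff v p q : peval v (Iff p q) = eqb (peval v p) (peval v q).
Proof. unfold Iff, Imp; simpl. destruct (peval v p), (peval v q); auto. Qed.

Lemma peval_top v : peval (Ag:=Ag) v Top = true.
Proof. unfold Top, Bot; simpl. destruct (v (Atom 0)); auto. Qed.

End Prop1.


Ltac bsolve := unfold sem_imp in *; try (intros ?v ?Hv);
  cbn [bigAnd map] in *; unfold Top, Iff, Imp, Bot in *; cbn [peval negb andb orb implb] in *;
  repeat match goal with
  | H : context [peval _ _] |- _ => revert H
  | H : context [?v ?x] |- _ => is_var v; lazymatch type of v with form _ -> bool => revert H end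
  end;
  repeat match goal with
  | |- context [peval ?v ?x] => destruct (peval v x)
  | |- context [?v ?x] => is_var v; lazymatch type of v with form _ -> bool => destruct (v x) end
  end; cbn [peval negb andb orb implb]; intros; try discriminate; auto.


Section Der.
Context {Ag : Type}.
Implicit Types a b c f g x y p q r : form Ag.
Implicit Types G H : form Ag -> Prop.

Lemma bigAnd_in x (l : list (form Ag)) : In x l -> sem_imp (bigAnd l) x.
Proof.
  intros Hin v. rewrite peval_bigAnd. intro H. rewrite forallb_forall in H. auto.
Qed.

Lemma bigAnd_sub (l1 l2 : list (form Ag)) : (forall x, In x l2 -> In x l1) ->
  sem_imp (bigAnd l1) (bigAnd l2).
Proof.
  intros Hs v. rewrite !peval_bigAnd, !forallb_forall. auto.
Qed.

Lemma derives_in G x : G x -> derives G x.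
Proof.
  intro Hx. exists [x]. split. { intros y [->|[]]; auto. }
  apply ax_taut. intro v. rewrite peval_imp, peval_bigAnd. simpl.
  destruct (peval v x); auto.
Qed.

Lemma derives_of_prov G x : prov x -> derives G x.
Proof.
  intro H. exists []. split. { intros y []. }
  eapply prov_sem; [exact H|]. intros v Hv. rewrite peval_imp, Hv. now destruct (peval v (bigAnd [])).
Qed.

Lemma derives_mono G H x : (forall y, G y -> H y) -> derives G x -> derives H x.
Proof. intros Hs [l [Hl Hp]]. exists l; split; auto. Qed.

Lemma derives_prov G a b : derives G a -> prov (Imp a b) -> derives G b.
Proof.
  intros [l [Hl Hp]] Hab. exists l; split; auto.
  eapply prov_sem2; [exact Hp|exact Hab|]. intros v Hv. simpl in Hv.
  rewrite !peval_imp in *. destruct (peval v (bigAnd l)), (peval v a), (peval v b); auto.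
Qed.

Lemma derives_and G a b : derives G a -> derives G b -> derives G (And a b).
Proof.
  intros [l1 [Hl1 Hp1]] [l2 [Hl2 Hp2]]. exists (l1 ++ l2). split.
  { intros y Hy. apply in_app_iff in Hy as [Hy|Hy]; auto. }
  eapply prov_sem2; [exact Hp1|exact Hp2|]. intros v Hv. simpl in Hv.
  rewrite !peval_imp in *. rewrite !peval_bigAnd in *. rewrite forallb_app. simpl.
  destruct (forallb (peval v) l1), (forallb (peval v) l2), (peval v a), (peval v b); auto.
Qed.

Lemma derives_combine G a b c : derives G a -> derives G b -> prov (Imp (And a b) c) -> derives G c.
Proof. intros H1 H2 H3. exact (derives_prov (derives_and H1 H2) H3). Qed.

Lemma derives_sem G a b : derives G a -> sem_imp a b -> derives G b.
Proof.
  intros H Hs. eapply derives_prov; [exact H|]. apply ax_taut. intro v.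
  rewrite peval_imp. destruct (peval v a) eqn:E; auto. now rewrite (Hs v E).
Qed.

Lemma derives_sem2 G a b c : derives G a -> derives G b -> sem_imp (And a b) c -> derives G c.
Proof. intros H1 H2 H3. exact (derives_sem (derives_and H1 H2) H3). Qed.

Lemma split_list G x (l : list (form Ag)) : (forall y, In y l -> G y \/ y = x) ->
  exists l', (forall y, In y l' -> G y) /\ (forall y, In y l -> In y l' \/ y = x).
Proof.
  induction l as [|z l IH]; intro Hl.
  - exists []. split; intros y [].
  - destruct IH as [l' [H1 H2]]. { intros y Hy. apply Hl. now right. }
    destruct (Hl z (or_introl eq_refl)) as [Hz|Hz].
    + exists (z :: l'). split.
      * intros y [<-|Hy]; auto.
      * intros y [<-|Hy]; [left; now left|]. destruct (H2 y Hy); auto. left; now right.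
    + exists l'. split; auto. intros y [<-|Hy]; auto.
Qed.

Lemma derives_ded G x b : derives (fun z => G z \/ z = x) b -> derives G (Imp x b).
Proof.
  intros [l [Hl Hp]]. destruct (@split_list G x l Hl) as [l' [H1 H2]].
  exists l'. split; auto.
  eapply prov_sem; [exact Hp|]. intros v Hv. rewrite !peval_imp in *.
  destruct (peval v (bigAnd l')) eqn:E1; simpl; auto.
  destruct (peval v x) eqn:E2; simpl; auto.
  assert (peval v (bigAnd l) = true) as E3.
  { rewrite peval_bigAnd, forallb_forall. rewrite peval_bigAnd, forallb_forall in E1.
    intros y Hy. destruct (H2 y Hy) as [Hy'|Hy']; [auto|subst y; auto]. }
  now rewrite E3 in Hv.
Qed.

End Der.


Section Box.
Context {Ag : Type}.
Implicit Types a b c f g x y p q r : form Ag.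
Variable B : form Ag -> form Ag.
Hypothesis Bnec : forall f, prov f -> prov (B f).
Hypothesis BK : forall f g, prov (Imp (B (Imp f g)) (Imp (B f) (B g))).

Lemma box_mono a b : prov (Imp a b) -> prov (Imp (B a) (B b)).
Proof. intro H. eapply r_mp; [apply BK|]. now apply Bnec. Qed.

Lemma box_bigAnd (l : list (form Ag)) : prov (Imp (bigAnd (map B l)) (B (bigAnd l))).
Proof.
  induction l as [|x l IH]; simpl.
  - assert (prov (B (bigAnd (Ag:=Ag) []))) as H.
    { apply Bnec, ax_taut. intro v. apply peval_top. }
    eapply prov_sem; [exact H|]. bsolve.
  - assert (prov (B (Imp x (Imp (bigAnd l) (And x (bigAnd l)))))) as H1.
    { apply Bnec, ax_taut. intro v. bsolve. }
    pose proof (r_mp (BK _ _) H1) as H2.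
    pose proof (BK (bigAnd l) (And x (bigAnd l))) as H3.
    eapply prov_sem2; [exact H2|eapply prov_and; [exact H3|exact IH]|].
    bsolve.
Qed.

End Box.

Section MCS.
Context {Ag : Type}.
Implicit Types a b c f g x y p q r : form Ag.
Variable Phi : form Ag -> Prop.
Variable L : list (form Ag).
Hypothesis HL : forall f, Phi f -> In f L.
Hypothesis Hneg : forall f, Phi f -> (forall c, f <> Neg c) -> Phi (Neg f).
Hypothesis Hsub : forall f, Phi (Neg f) -> Phi f.

Lemma mcs_ext G f : mcs Phi G -> Phi f -> ~ G f -> derives G (Imp f Bot).
Proof.
  intros [H1 [H2 H3]] Hf Hn. apply derives_ded.
  apply H3.
  - intros x Hx; now left.
  - intros x [Hx| ->]; auto.
  - exists f; split; auto.
Qed.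

Lemma mcs_closed G f : mcs Phi G -> derives G f -> Phi f -> G f.
Proof.
  intros Hm Hd Hf. apply NNPP. intro Hn.
  pose proof (mcs_ext Hm Hf Hn) as H.
  destruct Hm as [_ [Hc _]]. apply Hc.
  eapply derives_sem2; [exact Hd|exact H|]. intros v Hv. simpl in Hv.
  bsolve.
Qed.

Lemma mcs_neg G f : mcs Phi G -> Phi f -> ~ G f -> derives G (Neg f).
Proof.
  intros Hm Hf Hn. eapply derives_sem; [exact (mcs_ext Hm Hf Hn)|].
  bsolve.
Qed.

Lemma mcs_both G f : mcs Phi G -> derives G f -> derives G (Neg f) -> False.
Proof.
  intros [_ [Hc _]] H1 H2. apply Hc. eapply derives_sem2; [exact H1|exact H2|].
  bsolve.
Qed.

Definition cons_with (V : form Ag -> Prop) psi := ~ derives (fun z => V z \/ z = psi) Bot.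

Definition lstep psi (V : form Ag -> Prop) x : form Ag -> Prop :=
  fun y => V y \/ (y = x /\ Phi x /\ ~ derives (fun z => V z \/ z = x \/ z = psi) Bot).

Definition lfinal psi (V : form Ag -> Prop) (l : list (form Ag)) := fold_left (lstep psi) l V.

Lemma lfinal_inc psi l : forall V y, V y -> lfinal psi V l y.
Proof.
  induction l as [|x l IH]; simpl; auto. intros V y Hy. apply IH. now left.
Qed.

Lemma lfinal_phi psi l : forall V, (forall y, V y -> Phi y) -> forall y, lfinal psi V l y -> Phi y.
Proof.
  induction l as [|x l IH]; simpl; auto. intros V HV. apply IH.
  intros y [Hy|[-> [Hx _]]]; auto.
Qed.

Lemma lfinal_cons psi l : forall V, cons_with V psi -> cons_with (lfinal psi V l) psi.
Proof.
  induction l as [|x l IH]; simpl; auto. intros V HV. apply IH.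
  unfold cons_with, lstep. intro Hd.
  destruct (classic (Phi x /\ ~ derives (fun z => V z \/ z = x \/ z = psi) Bot)) as [Hc|Hc].
  - apply (proj2 Hc). eapply derives_mono; [|exact Hd].
    intros y [[Hy|[-> _]]| ->]; auto.
  - apply HV. eapply derives_mono; [|exact Hd].
    intros y [[Hy|[-> Hy]]| ->]; auto. contradiction.
Qed.

Lemma lfinal_max psi l : forall V x, In x l -> Phi x -> ~ lfinal psi V l x ->
  derives (fun z => lfinal psi V l z \/ z = x \/ z = psi) Bot.
Proof.
  induction l as [|y l IH]; simpl; [tauto|]. intros V x Hin Hx Hn.
  destruct (classic (In x l)) as [Hl|Hl]; [now apply IH|].
  destruct Hin as [Hyx|Hin]; [subst y|contradiction].
  destruct (classic (derives (fun z => V z \/ z = x \/ z = psi) Bot)) as [Hd|Hd].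
  - eapply derives_mono; [|exact Hd]. intros z [Hz|Hz]; [left|right; auto].
    apply lfinal_inc. now left.
  - exfalso. apply Hn. apply lfinal_inc. right. auto.
Qed.

Definition negp f := match f with Neg b => b | _ => Neg f end.

Lemma negp_phi f : Phi f -> Phi (negp f).
Proof.
  destruct f; simpl; intro H; try (apply Hneg; [auto|intros c Hc; discriminate]).
  now apply Hsub.
Qed.

Lemma negp_sem f : sem_imp (And f (negp f)) Bot.
Proof. destruct f; simpl; bsolve. Qed.

Lemma negp_eval v f : peval v (negp f) = negb (peval v f).
Proof. destruct f; simpl; auto. now destruct (peval v f). Qed.

Lemma lindenbaum (X : form Ag -> Prop) psi : (forall y, X y -> Phi y) -> cons_with X psi ->
  exists V, mcs Phi V /\ (forall y, X y -> V y) /\ cons_with V psi.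
Proof.
  intros HX HC. exists (lfinal psi X L).
  pose proof (lfinal_cons L HC) as Hc.
  split; [|split; [intros; now apply lfinal_inc|exact Hc]].
  split; [now apply lfinal_phi|]. split.
  - intro Hd. apply Hc. eapply derives_mono; [|exact Hd]. intros; now left.
  - intros D HVD HDP [y [Hy Hny]].
    assert (Hz : lfinal psi X L (negp y)).
    { apply NNPP. intro Hnz.
      pose proof (HDP y Hy) as Hpy. pose proof (negp_phi Hpy) as Hpz.
      pose proof (lfinal_max psi L X (HL Hpy) Hpy Hny) as D1.
      pose proof (lfinal_max psi L X (HL Hpz) Hpz Hnz) as D2.
      apply Hc.
      assert (E1 : derives (fun z => lfinal psi X L z \/ z = psi) (Imp y Bot)).
      { apply derives_ded. eapply derives_mono; [|exact D1]. intros z [Hz|[Hz|Hz]]; auto. }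
      assert (E2 : derives (fun z => lfinal psi X L z \/ z = psi) (Imp (negp y) Bot)).
      { apply derives_ded. eapply derives_mono; [|exact D2]. intros z [Hz|[Hz|Hz]]; auto. }
      eapply derives_sem2; [exact E1|exact E2|].
      intros v Hv. pose proof (negp_eval v y) as Hs. revert Hv. cbn [peval]. unfold Imp, Bot. cbn [peval]. rewrite Hs.
      destruct (peval v y), (v (Atom 0)); cbn; auto. }
    eapply derives_sem2; [apply derives_in; exact Hy|apply derives_in; apply HVD; exact Hz|].
    apply negp_sem.
Qed.

End MCS.


Section Fin.
Context {Ag : Type}.
Implicit Types a b c f g x y p q r : form Ag.

Lemma subf_trans a b c : subf a b -> subf b c -> subf a c.
Proof. intros H1 H2. induction H2; [exact H1|apply sf_neg|apply sf_andl|apply sf_andr|apply sf_Aw|apply sf_Inf|apply sf_Ind|apply sf_Cp|apply sf_Ex]; auto. Qed.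

Fixpoint subs f : list (form Ag) :=
  f :: match f with
       | Atom _ => []
       | Neg a => subs a
       | And a b => subs a ++ subs b
       | Aw _ a | Inf _ a | Ind _ a | Cp _ a | Ex _ a => subs a
       end.

Lemma subs_in c f : subf c f -> In c (subs f).
Proof. intro H; induction H; try (destruct c; simpl; tauto); simpl; try tauto; right; apply in_or_app; tauto. Qed.

Variable f0 : form Ag.
Definition InS c := subf c f0.

Inductive Gp : form Ag -> Prop :=
| g_S : forall f, InS f -> Gp f
| g_Aw : forall i c, InS c -> Gp (Aw i c)
| g_Cp : forall i c, InS c -> Gp (Cp i c)
| g_IA : forall i c, InS c -> Gp (Inf i (Aw i c))
| g_INA : forall i c, InS c -> Gp (Inf i (Neg (Aw i c)))
| g_NA : forall i c, InS c -> Gp (Neg (Aw i c))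
| g_ICp : forall i c, InS c -> Gp (Inf i (Cp i c))
| g_DICp : forall i c, InS c -> Gp (Ind i (Inf i (Cp i c)))
| g_DAt : forall i (p : nat), InS (Atom p) -> Gp (Ind i (Atom p)).

Inductive Fn : form Ag -> Prop :=
| f_G : forall f, Gp f -> Fn f
| f_N : forall g, Gp g -> Fn (Neg g)
| f_II : forall i g, Gp (Inf i g) -> Fn (Inf i (Inf i g))
| f_INI : forall i g, Gp (Inf i g) -> Fn (Inf i (Neg (Inf i g)))
| f_NII : forall i g, Gp (Inf i g) -> Fn (Neg (Inf i (Inf i g)))
| f_NINI : forall i g, Gp (Inf i g) -> Fn (Neg (Inf i (Neg (Inf i g))))
| f_DD : forall i g, Gp (Ind i g) -> Fn (Ind i (Ind i g))
| f_DND : forall i g, Gp (Ind i g) -> Fn (Ind i (Neg (Ind i g)))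
| f_NDD : forall i g, Gp (Ind i g) -> Fn (Neg (Ind i (Ind i g)))
| f_NDND : forall i g, Gp (Ind i g) -> Fn (Neg (Ind i (Neg (Ind i g)))).

Lemma InS_sub c f : InS f -> subf c f -> InS c.
Proof. unfold InS; intros; eapply subf_trans; eauto. Qed.

Ltac sinv H := inversion H; subst; clear H.

Lemma Gp_sub c f : Gp f -> subf c f -> Gp c.
Proof.
  intros Hg Hs. destruct Hg.
  - apply g_S. eapply InS_sub; eauto.
  - sinv Hs; [apply g_Aw; auto|apply g_S; eapply InS_sub; eauto].
  - sinv Hs; [apply g_Cp; auto|apply g_S; eapply InS_sub; eauto].
  - sinv Hs; [apply g_IA; auto|]. match goal with H : subf _ _ |- _ => sinv H end;
      [apply g_Aw; auto|apply g_S; eapply InS_sub; eauto].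
  - sinv Hs; [apply g_INA; auto|]. match goal with H : subf _ _ |- _ => sinv H end;
      [apply g_NA; auto|]. match goal with H : subf _ _ |- _ => sinv H end;
      [apply g_Aw; auto|apply g_S; eapply InS_sub; eauto].
  - sinv Hs; [apply g_NA; auto|]. match goal with H : subf _ _ |- _ => sinv H end;
      [apply g_Aw; auto|apply g_S; eapply InS_sub; eauto].
  - sinv Hs; [apply g_ICp; auto|]. match goal with H : subf _ _ |- _ => sinv H end;
      [apply g_Cp; auto|apply g_S; eapply InS_sub; eauto].
  - sinv Hs; [apply g_DICp; auto|]. match goal with H : subf _ _ |- _ => sinv H end;
      [apply g_ICp; auto|]. match goal with H : subf _ _ |- _ => sinv H end;
      [apply g_Cp; auto|apply g_S; eapply InS_sub; eauto].
  - sinv Hs; [apply g_DAt; auto|]. match goal with H : subf _ _ |- _ => sinv H end.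
    apply g_S; auto.
Qed.

Lemma Fn_sub c f : Fn f -> subf c f -> Fn c.
Proof.
  intros Hf Hs. destruct Hf.
  - apply f_G. eapply Gp_sub; eauto.
  - sinv Hs; [apply f_N; auto|apply f_G; eapply Gp_sub; eauto].
  - sinv Hs; [apply f_II; auto|apply f_G; eapply Gp_sub; eauto].
  - sinv Hs; [apply f_INI; auto|]. match goal with H : subf _ _ |- _ => sinv H end;
      [apply f_N; auto|apply f_G; eapply Gp_sub; eauto].
  - sinv Hs; [apply f_NII; auto|]. match goal with H : subf _ _ |- _ => sinv H end;
      [apply f_II; auto|apply f_G; eapply Gp_sub; eauto].
  - sinv Hs; [apply f_NINI; auto|]. match goal with H : subf _ _ |- _ => sinv H end;
      [apply f_INI; auto|]. match goal with H : subf _ _ |- _ => sinv H end;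
      [apply f_N; auto|apply f_G; eapply Gp_sub; eauto].
  - sinv Hs; [apply f_DD; auto|apply f_G; eapply Gp_sub; eauto].
  - sinv Hs; [apply f_DND; auto|]. match goal with H : subf _ _ |- _ => sinv H end;
      [apply f_N; auto|apply f_G; eapply Gp_sub; eauto].
  - sinv Hs; [apply f_NDD; auto|]. match goal with H : subf _ _ |- _ => sinv H end;
      [apply f_DD; auto|apply f_G; eapply Gp_sub; eauto].
  - sinv Hs; [apply f_NDND; auto|]. match goal with H : subf _ _ |- _ => sinv H end;
      [apply f_DND; auto|]. match goal with H : subf _ _ |- _ => sinv H end;
      [apply f_N; auto|apply f_G; eapply Gp_sub; eauto].
Qed.

Lemma Fn_Aw i f : Fn (Aw i f) -> InS f.
Proof.
  intro H; sinv H. sinv H0; auto. eapply InS_sub; eauto. constructor; constructor.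
Qed.
Lemma Fn_Cp i f : Fn (Cp i f) -> InS f.
Proof.
  intro H; sinv H. sinv H0; auto. eapply InS_sub; eauto. constructor; constructor.
Qed.
Lemma Fn_Ex i f : Fn (Ex i f) -> InS f.
Proof.
  intro H; sinv H. sinv H0; auto. eapply InS_sub; eauto. constructor; constructor.
Qed.

Lemma cl_Fn f : cl f0 f -> Fn f.
Proof.
  induction 1.
  - apply f_G, g_S. constructor.
  - eapply Fn_sub; eauto.
  - destruct IHcl.
    + now apply f_N.
    + exfalso; eapply H0; eauto.
    + now apply f_NII.
    + now apply f_NINI.
    + exfalso; eapply H0; eauto.
    + exfalso; eapply H0; eauto.
    + now apply f_NDD.
    + now apply f_NDND.
    + exfalso; eapply H0; eauto.
    + exfalso; eapply H0; eauto.
  - apply Fn_Aw in IHcl. apply f_G, g_Aw. eapply InS_sub; eauto.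
  - apply Fn_Aw in IHcl. apply f_G, g_IA; auto.
  - apply Fn_Aw in IHcl. apply f_G, g_INA; auto.
  - apply Fn_Aw in IHcl. apply f_G, g_DAt. eapply InS_sub; eauto.
  - sinv IHcl.
    + now apply f_II.
    + exfalso; apply H0; eauto.
    + exfalso; apply H0; eauto.
  - sinv IHcl.
    + now apply f_INI.
    + exfalso; apply H0; eauto.
    + exfalso; apply H0; eauto.
  - sinv IHcl.
    + now apply f_DD.
    + exfalso; apply H0; eauto.
    + exfalso; apply H0; eauto.
  - sinv IHcl.
    + now apply f_DND.
    + exfalso; apply H0; eauto.
    + exfalso; apply H0; eauto.
  - apply Fn_Cp in IHcl. apply f_G, g_DICp; auto.
  - apply Fn_Ex in IHcl. apply f_G, g_Aw; auto.
  - apply Fn_Ex in IHcl. apply f_G, g_Cp; auto.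
Qed.

Variable AG : list Ag.
Hypothesis HAG : forall i, In i AG.

Definition LG : list (form Ag) :=
  subs f0 ++ flat_map (fun i => flat_map (fun c =>
    [Aw i c; Cp i c; Inf i (Aw i c); Inf i (Neg (Aw i c)); Neg (Aw i c);
     Inf i (Cp i c); Ind i (Inf i (Cp i c)); Ind i c]) (subs f0)) AG.

Definition LF : list (form Ag) :=
  LG ++ map (fun g => Neg g) LG ++ flat_map (fun i => flat_map (fun x =>
    [Inf i x; Inf i (Neg x); Neg (Inf i x); Neg (Inf i (Neg x));
     Ind i x; Ind i (Neg x); Neg (Ind i x); Neg (Ind i (Neg x))]) LG) AG.

Lemma Gp_LG f : Gp f -> In f LG.
Proof.
  intro H. unfold LG. apply in_or_app.
  destruct H; try (left; now apply subs_in);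
  right; apply in_flat_map; exists i; split; auto;
  apply in_flat_map; (eexists; split; [apply subs_in; eassumption|]); simpl; tauto.
Qed.

Lemma Fn_LF f : Fn f -> In f LF.
Proof.
  intro H. unfold LF. apply in_or_app.
  destruct H; try (left; now apply Gp_LG); right; apply in_or_app;
  try (left; apply in_map_iff; eexists; split; [reflexivity|now apply Gp_LG]);
  right; apply in_flat_map; exists i; split; auto;
  apply in_flat_map; (eexists; split; [apply Gp_LG; eassumption|]); simpl; tauto.
Qed.

End Fin.

Lemma cl_finite {Ag} (HAg : exists l : list Ag, forall i, In i l) (f0 : form Ag) :
  exists L, forall f, cl f0 f -> In f L.
Proof.
  destruct HAg as [AG HAG]. exists (LF f0 AG). intros f Hf.
  apply Fn_LF; auto. now apply cl_Fn.
Qed.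


Section Truth.
Context {Ag : Type}.
Implicit Types a b c f g x y q r : form Ag.
Variable f0 : form Ag.
Variable L : list (form Ag).
Hypothesis HL : forall f, cl f0 f -> In f L.

Notation Phi := (cl f0).

Lemma Phi_neg f : Phi f -> (forall c, f <> Neg c) -> Phi (Neg f).
Proof. intros; now apply cl_neg. Qed.
Lemma Phi_sub f c : Phi f -> subf c f -> Phi c.
Proof. intros; eapply cl_sub; eauto. Qed.
Lemma Phi_negsub f : Phi (Neg f) -> Phi f.
Proof. intros; eapply cl_sub; eauto. constructor; constructor. Qed.

Definition wset (w : W Phi) := proj1_sig w.
Lemma wmcs (w : W Phi) : mcs Phi (wset w).
Proof. exact (proj2_sig w). Qed.

Lemma w_phi (w : W Phi) f : wset w f -> Phi f.
Proof. intro H. exact (proj1 (wmcs w) f H). Qed.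

Lemma w_closed (w : W Phi) f : derives (wset w) f -> Phi f -> wset w f.
Proof. apply mcs_closed, wmcs. Qed.

Lemma w_prov (w : W Phi) a b : wset w a -> prov (Imp a b) -> Phi b -> wset w b.
Proof. intros Ha Hp Hb. apply w_closed; auto. eapply derives_prov; [apply derives_in; exact Ha|exact Hp]. Qed.

Lemma iff_l a b : prov (Iff a b) -> prov (Imp a b).
Proof. intro H. eapply prov_sem; [exact H|]. bsolve. Qed.
Lemma iff_r a b : prov (Iff a b) -> prov (Imp b a).
Proof. intro H. eapply prov_sem; [exact H|]. bsolve. Qed.

Lemma w_iff (w : W Phi) a b : prov (Iff a b) -> Phi a -> Phi b -> (wset w a <-> wset w b).
Proof.
  intros H Ha Hb. split; intro Hx; eapply w_prov; eauto using iff_l, iff_r.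
Qed.

Section Exist.
Variable B : form Ag -> form Ag.
Hypothesis Bnec : forall f, prov f -> prov (B f).
Hypothesis BK : forall f g, prov (Imp (B (Imp f g)) (Imp (B f) (B g))).
Hypothesis Bsub : forall f, Phi (B f) -> Phi f.

Lemma existence (w : W Phi) c : ~ derives (wset w) (B c) ->
  exists v : W Phi, (forall f, wset w (B f) -> wset v f) /\ cons_with (wset v) (Neg c).
Proof.
  intro Hn.
  assert (HX : forall y, wset w (B y) -> Phi y) by (intros y Hy; apply Bsub; eapply w_phi; eauto).
  assert (HC : cons_with (fun y => wset w (B y)) (Neg c)).
  { intro Hd. apply Hn. apply derives_ded in Hd.
    destruct Hd as [l [Hl Hp]].
    assert (Hp2 : prov (Imp (bigAnd l) c)) by (eapply prov_sem; [exact Hp|]; bsolve).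
    pose proof (box_mono B Bnec BK Hp2) as H3.
    pose proof (box_bigAnd B Bnec BK l) as H4.
    exists (map B l). split.
    - intros x Hx. apply in_map_iff in Hx as [y [<- Hy]]. auto.
    - eapply prov_sem2; [exact H4|exact H3|]. bsolve. }
  destruct (lindenbaum Phi L HL Phi_neg Phi_negsub HX HC) as [V [Hm [Hs Hc]]].
  exists (exist _ V Hm). split; auto.
Qed.
End Exist.


Lemma occ_atom (p n : nat) : occurs (Ag:=Ag) p (Atom n) -> p = n.
Proof. intro H. inversion H. auto. Qed.


Lemma imp_and_l a b c : prov (Imp a (And b c)) -> prov (Imp a b).
Proof. intro H; eapply prov_sem; [exact H|]; bsolve. Qed.
Lemma imp_and_r a b c : prov (Imp a (And b c)) -> prov (Imp a c).
Proof. intro H; eapply prov_sem; [exact H|]; bsolve. Qed.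

Lemma aw_lemma (w : W Phi) i a : Phi (Aw i a) ->
  (wset w (Aw i a) <-> forall p, occurs p a -> wset w (Aw i (Atom p))).
Proof.
  revert w. induction a as [n|a IH|a IHa b IHb|j a IH|j a IH|j a IH|j a IH|j a IH];
    intros w Hphi.
  - split; intro H.
    + intros p Hp. apply occ_atom in Hp. now subst.
    + apply H. constructor.
  - assert (Ha : Phi (Aw i a)) by (eapply cl_A_sub; [exact Hphi|constructor; constructor]).
    rewrite <- (w_iff w (ax_A_neg i a) Ha Hphi). rewrite (IH w Ha).
    unfold occurs. split; intros H p Hp; apply H.
    + inversion Hp; subst; try discriminate; assumption.
    + apply sf_neg; exact Hp.
  - assert (Ha : Phi (Aw i a)) by (eapply cl_A_sub; [exact Hphi|apply sf_andl; constructor]).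
    assert (Hb : Phi (Aw i b)) by (eapply cl_A_sub; [exact Hphi|apply sf_andr; constructor]).
    pose proof (ax_A_and i a b) as Hax.
    assert (E : wset w (Aw i (And a b)) <-> wset w (Aw i a) /\ wset w (Aw i b)).
    { split.
      - intro H. split; (eapply w_prov; [exact H| |auto]);
          [eapply imp_and_l|eapply imp_and_r]; eapply iff_l; exact Hax.
      - intros [H1 H2]. apply w_closed; auto.
        eapply derives_prov; [apply derives_and; apply derives_in; [exact H1|exact H2]|].
        eapply iff_r; exact Hax. }
    rewrite E, (IHa w Ha), (IHb w Hb). unfold occurs.
    split.
    + intros [H1 H2] p Hp. inversion Hp; subst; try discriminate; auto.
    + intro H. split; intros p Hp; apply H; [apply sf_andl|apply sf_andr]; exact Hp.
  - assert (Ha : Phi (Aw i a)) by (eapply cl_A_sub; [exact Hphi|constructor; constructor]).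
    rewrite <- (w_iff w (ax_A_A i j a) Ha Hphi). rewrite (IH w Ha).
    unfold occurs. split; intros H p Hp; apply H.
    + inversion Hp; subst; try discriminate; assumption.
    + constructor; exact Hp.
  - assert (Ha : Phi (Aw i a)) by (eapply cl_A_sub; [exact Hphi|constructor; constructor]).
    rewrite <- (w_iff w (ax_A_I i j a) Ha Hphi). rewrite (IH w Ha).
    unfold occurs. split; intros H p Hp; apply H.
    + inversion Hp; subst; try discriminate; assumption.
    + constructor; exact Hp.
  - assert (Ha : Phi (Aw i a)) by (eapply cl_A_sub; [exact Hphi|constructor; constructor]).
    rewrite <- (w_iff w (ax_A_Ind i j a) Ha Hphi). rewrite (IH w Ha).
    unfold occurs. split; intros H p Hp; apply H.
    + inversion Hp; subst; try discriminate; assumption.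
    + constructor; exact Hp.
  - assert (Ha : Phi (Aw i a)) by (eapply cl_A_sub; [exact Hphi|constructor; constructor]).
    rewrite <- (w_iff w (ax_A_Cp i j a) Ha Hphi). rewrite (IH w Ha).
    unfold occurs. split; intros H p Hp; apply H.
    + inversion Hp; subst; try discriminate; assumption.
    + constructor; exact Hp.
  - assert (Ha : Phi (Aw i a)) by (eapply cl_A_sub; [exact Hphi|constructor; constructor]).
    rewrite <- (w_iff w (ax_A_E i j a) Ha Hphi). rewrite (IH w Ha).
    unfold occurs. split; intros H p Hp; apply H.
    + inversion Hp; subst; try discriminate; assumption.
    + constructor; exact Hp.
Qed.

Lemma sub_Ind i f : subf f (Ind i f).
Proof. constructor; constructor. Qed.
Lemma sub_Inf i f : subf f (Inf i f).
Proof. constructor; constructor. Qed.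

Fixpoint cand (l : list (form Ag)) : list (list (form Ag)) :=
  match l with
  | [] => [[]]
  | x :: r => flat_map (fun s => [x :: s; s]) (cand r)
  end.

Lemma cand_char (V : form Ag -> Prop) (l : list (form Ag)) :
  exists s, In s (cand l) /\ (forall x, In x s -> V x) /\ (forall x, In x l -> V x -> In x s).
Proof.
  induction l as [|y l IH].
  - exists []. simpl. split; [now left|split; intros x []].
  - destruct IH as [s [H1 [H2 H3]]].
    destruct (classic (V y)) as [Hy|Hy].
    + exists (y :: s). split; [apply in_flat_map; exists s; simpl; tauto|].
      split; [intros x [<-|Hx]; auto|]. intros x [<-|Hx] Hv; [now left|right; auto].
    + exists s. split; [apply in_flat_map; exists s; simpl; tauto|].
      split; auto. intros x [<-|Hx] Hv; [contradiction|auto].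
Qed.

Lemma filter_prop {A} (P : A -> Prop) (l : list A) : exists s, forall (z : A), In z s <-> In z l /\ P z.
Proof.
  induction l as [|y l IH].
  - exists []. simpl; tauto.
  - destruct IH as [s Hs]. destruct (classic (P y)) as [Hy|Hy].
    + exists (y :: s). intro z. simpl. rewrite Hs. split; [intros [<-|H]; tauto|].
      intros [[<-|H] HP]; tauto.
    + exists s. intro z. simpl. rewrite Hs. split; [tauto|]. intros [[<-|H] HP]; tauto.
Qed.

Fixpoint bigOr (l : list (form Ag)) : form Ag :=
  match l with
  | [] => Bot
  | x :: r => Neg (And (Neg x) (Neg (bigOr r)))
  end.

Lemma bigOr_intro x l : In x l -> prov (Imp x (bigOr l)).
Proof.
  induction l as [|y l IH]; intros Hx; [destruct Hx|].
  destruct Hx as [<-|Hx].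
  - apply ax_taut. intro v. cbn [bigOr]. bsolve.
  - eapply prov_sem; [exact (IH Hx)|]. cbn [bigOr]. bsolve.
Qed.

Lemma bigOr_elim c l : (forall x, In x l -> prov (Imp x c)) -> prov (Imp (bigOr l) c).
Proof.
  induction l as [|y l IH]; intros H.
  - apply ax_taut. intro v. cbn [bigOr]. bsolve.
  - eapply prov_sem2; [exact (H y (or_introl eq_refl))|apply IH; intros; apply H; now right|].
    cbn [bigOr]. bsolve.
Qed.

Definition charL (v : W Phi) (l : list (form Ag)) :=
  (forall x, In x l -> wset v x) /\ (forall x, Phi x -> wset v x -> In x l).

Lemma char_exists (v : W Phi) : exists l, In l (cand L) /\ charL v l.
Proof.
  destruct (cand_char (wset v) L) as [l [H1 [H2 H3]]]. exists l. split; [exact H1|]. split; [exact H2|]. intros x Hx Hv. apply H3; auto.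

Qed.

Lemma char_prov (v : W Phi) l c : charL v l -> derives (wset v) c -> prov (Imp (bigAnd l) c).
Proof.
  intros [H1 H2] [l2 [Hl2 Hp]]. eapply prov_sem; [exact Hp|].
  assert (Hs : sem_imp (bigAnd l) (bigAnd l2)).
  { apply bigAnd_sub. intros x Hx. apply H2; auto. eapply w_phi; eauto. }
  intros v0 Hv0. specialize (Hs v0). revert Hv0 Hs. bsolve.
Qed.

Lemma char_der (v : W Phi) l : charL v l -> derives (wset v) (bigAnd l).
Proof.
  intros [H1 H2]. exists l. split; auto. apply ax_taut. intro v0. bsolve.
Qed.

Lemma cp_up (i : Ag) a (x y : W Phi) : Phi (Cp i a) -> cpR i x y -> wset x (Cp i a) -> wset y (Cp i a).
Proof.
  intros Hphi H. induction H as [x y [t [H1 H2]]|x y z _ IH1 _ IH2]; [|auto].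
  intro Hx. apply H2. apply H1.
  eapply w_prov; [exact Hx| |apply cl_Cp; exact Hphi].
  eapply prov_sem; [apply (ax_Cp_fix i a)|]. bsolve.
Qed.

Lemma w_refl_ind (i : Ag) (w : W Phi) : indR i w w.
Proof.
  intros f Hf. eapply w_prov; [exact Hf|apply ax_Ind_T|].
  eapply Phi_sub; [eapply w_phi; exact Hf|constructor; constructor].
Qed.
Lemma w_refl_sim (i : Ag) (w : W Phi) : simR i w w.
Proof.
  intros f Hf. eapply w_prov; [exact Hf|apply ax_I_T|].
  eapply Phi_sub; [eapply w_phi; exact Hf|constructor; constructor].
Qed.

Lemma cp_lemma (i : Ag) a (IH : forall w : W Phi, sat w a <-> wset w a) (Hphi : Phi (Cp i a))
  (w : W Phi) : (forall v, cpR i w v -> sat v a) <-> wset w (Cp i a).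
Proof.
  assert (Ha : Phi a) by (eapply Phi_sub; [exact Hphi|constructor; constructor]).
  split.
  - intro HA'. assert (HA : forall v, cpR i w v -> wset v a) by (intros v Hv; apply IH; auto).
    clear HA'.
    destruct (filter_prop (fun l => exists v, cpR i w v /\ charL v l) (cand L)) as [S HS].
    set (chi := bigOr (map bigAnd S)).
    assert (HY : forall v, cpR i w v -> exists l, In l S /\ charL v l).
    { intros v Hv. destruct (char_exists v) as [l [H1 H2]]. exists l. split; auto.
      apply HS. split; eauto. }
    assert (HchiI : forall v, cpR i w v -> derives (wset v) chi).
    { intros v Hv. destruct (HY v Hv) as [l [H1 H2]].
      eapply derives_prov; [apply char_der; exact H2|].
      apply bigOr_intro. apply in_map; auto. }
    assert (CA : prov (Imp chi a)).
    { apply bigOr_elim. intros x Hx. apply in_map_iff in Hx as [l [<- Hl]].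
      apply HS in Hl as [_ [v [Hv Hc]]]. apply ax_taut. intro v0.
      pose proof (bigAnd_in _ _ (proj2 Hc a Ha (HA v Hv)) v0) as Hs. revert Hs. bsolve. }
    assert (CB : prov (Imp chi (Ind i (Inf i chi)))).
    { apply bigOr_elim. intros x Hx. apply in_map_iff in Hx as [l [<- Hl]].
      apply HS in Hl as [_ [v [Hv Hc]]]. apply NNPP. intro Hn.
      assert (Hnd : ~ derives (wset v) (Ind i (Inf i chi))).
      { intro Hd. apply Hn. eapply char_prov; eauto. }
      destruct (existence (Ind i) (r_nec_Ind i) (ax_Ind_K i)
          (fun f Hf => Phi_sub Hf (sub_Ind i f)) v _ Hnd) as [t [Ht Hct]].
      assert (Hnd2 : ~ derives (wset t) (Inf i chi)).
      { intro Hd. apply Hct. eapply derives_sem2;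
          [eapply derives_mono; [|exact Hd]; intros; now left
          |apply derives_in; now right|]. bsolve. }
      destruct (existence (Inf i) (r_nec_I i) (ax_I_K i)
          (fun f Hf => Phi_sub Hf (sub_Inf i f)) t _ Hnd2) as [u [Hu Hcu]].
      assert (Hwu : cpR i w u).
      { eapply t_trans; [exact Hv|]. apply t_step. exists t. split; [exact Ht|exact Hu]. }
      apply Hcu. eapply derives_sem2;
        [eapply derives_mono; [|exact (HchiI u Hwu)]; intros; now left
        |apply derives_in; now right|]. bsolve. }
    assert (Hww : cpR i w w) by (apply t_step; exists w; split; [apply w_refl_ind|apply w_refl_sim]).
    pose proof (r_mp (ax_Cp_ind i chi) (r_nec_Cp i CB)) as H1.
    pose proof (box_mono (Cp i) (r_nec_Cp i) (ax_Cp_K i) CA) as H2.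
    apply w_closed; auto.
    eapply derives_prov; [eapply derives_prov; [exact (HchiI w Hww)|exact H1]|exact H2].
  - intros Hw v Hv. apply IH.
    pose proof (cp_up Hphi Hv Hw) as Hv'.
    eapply w_prov; [exact Hv'| |exact Ha].
    eapply prov_sem; [apply (ax_Cp_fix i a)|]. bsolve.
Qed.

Lemma truth f : forall w : W Phi, Phi f -> (sat w f <-> wset w f).
Proof.
  induction f as [n|a IH|a IHa b IHb|i a IH|i a IH|i a IH|i a IH|i a IH]; intros w Hf.
  - simpl. reflexivity.
  - assert (Ha : Phi a) by (eapply Phi_negsub; exact Hf).
    simpl. rewrite (IH w Ha). split.
    + intro Hn. apply w_closed; auto. eapply mcs_neg; [apply wmcs|exact Ha|exact Hn].
    + intros Hn Hp. eapply mcs_both; [apply wmcs|apply derives_in; exact Hp|apply derives_in; exact Hn].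
  - assert (Ha : Phi a) by (eapply Phi_sub; [exact Hf|apply sf_andl; constructor]).
    assert (Hb : Phi b) by (eapply Phi_sub; [exact Hf|apply sf_andr; constructor]).
    simpl. rewrite (IHa w Ha), (IHb w Hb). split.
    + intros [H1 H2]. apply w_closed; auto. apply derives_and; apply derives_in; auto.
    + intro H. split; (eapply w_prov; [exact H| |auto]); apply ax_taut; intro v; bsolve.
  - simpl. unfold awset. symmetry. apply aw_lemma; auto.
  - assert (Ha : Phi a) by (eapply Phi_sub; [exact Hf|constructor; constructor]).
    simpl. split.
    + intro H. apply NNPP. intro Hn.
      assert (Hnd : ~ derives (wset w) (Inf i a)) by (intro Hd; apply Hn; apply w_closed; auto).
      destruct (existence (Inf i) (r_nec_I i) (ax_I_K i)
          (fun f Hf => Phi_sub Hf (sub_Inf i f)) w _ Hnd) as [v [Hv Hc]].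
      apply Hc. pose proof (proj1 (IH v Ha) (H v Hv)) as Hva.
      eapply derives_sem2; [apply derives_in; left; exact Hva|apply derives_in; now right|]. bsolve.
    + intros H v Hv. apply (IH v Ha). apply Hv. exact H.
  - assert (Ha : Phi a) by (eapply Phi_sub; [exact Hf|constructor; constructor]).
    simpl. split.
    + intro H. apply NNPP. intro Hn.
      assert (Hnd : ~ derives (wset w) (Ind i a)) by (intro Hd; apply Hn; apply w_closed; auto).
      destruct (existence (Ind i) (r_nec_Ind i) (ax_Ind_K i)
          (fun f Hf => Phi_sub Hf (sub_Ind i f)) w _ Hnd) as [v [Hv Hc]].
      apply Hc. pose proof (proj1 (IH v Ha) (H v Hv)) as Hva.
      eapply derives_sem2; [apply derives_in; left; exact Hva|apply derives_in; now right|]. bsolve.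
    + intros H v Hv. apply (IH v Ha). apply Hv. exact H.
  - assert (Ha : Phi a) by (eapply Phi_sub; [exact Hf|constructor; constructor]).
    simpl. apply cp_lemma; auto.
  - assert (Ha : Phi a) by (eapply Phi_sub; [exact Hf|constructor; constructor]).
    assert (HA : Phi (Aw i a)) by (apply cl_E_A; exact Hf).
    assert (HC : Phi (Cp i a)) by (apply cl_E_Cp; exact Hf).
    simpl. unfold awset. rewrite <- (aw_lemma w HA). rewrite (cp_lemma (fun w => IH w Ha) HC w).
    pose proof (ax_E i a) as Hax. split.
    + intros [H1 H2]. apply w_closed; auto.
      eapply derives_prov; [apply derives_and; apply derives_in; [exact H1|exact H2]|].
      eapply iff_r; exact Hax.
    + intro H. split; (eapply w_prov; [exact H| |auto]);
        [eapply imp_and_l|eapply imp_and_r]; eapply iff_l; exact Hax.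
Qed.

End Truth.

Theorem lemma12 (Ag : Type) (HAg : exists l : list Ag, forall i, In i l)
  (f0 : form Ag) (w : W (cl f0)) (f : form Ag) :
  cl f0 f -> (sat w f <-> proj1_sig w f).
Proof.
  intro Hf. destruct (cl_finite HAg f0) as [L HL].
  exact (@truth Ag f0 L HL f w Hf).
Qed.
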